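(* Let $m,n\ge1$ be integers, $A=(a_{ij})$ an $n\times m$ real matrix, $0<\delta<1$ real and $s>1$ an integer. Suppose there is an $m$-tuple of integers $s_1,\dots,s_m$ with $$s=\max_j|s_j|>2^{\frac{(m+n-1)n}{4m}}\left(\frac{n\delta^2}{m}\right)^{\frac{n}{2(m+n)}}\quad\text{and}\quad \max_i\|s_1a_{i1}+\dots+s_ma_{im}\|\le\delta s^{-\frac{m}{n}}.$$ Then applying the ILLL-algorithm to $A$ with $$q_{\max}\ge 2^{\frac{m^2+m(n-1)+4n}{4m}}\left(\frac{m}{n\delta^2}\right)^{\frac{n}{2(m+n)}}s$$ yields an $m$-tuple $q_1,\dots,q_m$ with $$\max_j|q_j|\le 2^{\frac{m^2+m(n-1)+4n}{4m}}\left(\frac{m}{n\delta^2}\right)^{\frac{n}{2(m+n)}}s\quad\text{and}\quad \max_i\|q_1a_{i1}+\dots+q_ma_{im}\|\le 2^{\frac{m+n}{2}}\sqrt n\,\delta s^{-\frac{m}{n}}.$$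
   Context: $\|x\|$ denotes the distance from $x\in\mathbb R$ to the nearest integer. A basis $b_1,\dots,b_r$ of $\mathbb R^r$ with Gram–Schmidt vectors $b_i^*=b_i-\sum_{j<i}\mu_{ij}b_j^*$, $\mu_{ij}=(b_i,b_j^* )/(b_j^*,b_j^* )$, is reduced if $|\mu_{ij}|\le\frac12$ ($j<i$) and $|b_i^*+\mu_{i,i-1}b_{i-1}^*|^2\ge\frac34|b_{i-1}^*|^2$ ($1<i\le r$); the LLL-algorithm returns a reduced basis of the lattice generated by its input basis. The ILLL-algorithm on input $A$ and $q_{\max}>1$: put $k'=\left\lceil -\frac{(m+n-1)(m+n)}{4n}+\frac{m\log_2 q_{\max}}{n}\right\rceil$ and, for $k\ge1$, $c(k)=\left(2^{-\frac{m+n+3}{4}-k+1}\right)^{\frac{m+n}{m}}$. Start with the basis given by the columns of $B=\begin{pmatrix} I_n & A\\ 0& c(1)I_m\end{pmatrix}$. In iteration $k=1,\dots,k'$: apply the LLL-algorithm to the current basis; from the first vector of the reduced basis, which has the form $(q_1a_{11}+\dots+q_ma_{1m}-p_1,\dots,q_1a_{n1}+\dots+q_ma_{nm}-p_n,c(k)q_1,\dots,c(k)q_m)^T$ with $p_i,q_j\in\mathbb Z$, output the $m$-tuple $q(k)=(q_1,\dots,q_m)$; then divide the last $m$ coordinates of all basis vectors by $2^{\frac{m+n}{m}}$. The $m$-tuples returned by the algorithm are $q(1),\dots,q(k')$. *)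

(* Defs.v *)
From HB Require Import structures.
From mathcomp Require Import all_boot all_order all_algebra.
From mathcomp Require Import all_classical all_reals all_analysis.
Set Implicit Arguments. Unset Strict Implicit. Unset Printing Implicit Defensive.
Import Order.TTheory GRing.Theory Num.Theory.
Local Open Scope ring_scope.

Section ILLL.
Variable R : realType.

Definition dnint (x : R) : R :=
  Num.min (x - (Num.floor x)%:~R) ((Num.ceil x)%:~R - x).

Definition dotv (d : nat) (u v : 'cV[R]_d) : R := \sum_(i < d) u i 0 * v i 0.

(* the k-th basis vector (k-th column) of B, nat-indexed (0 if k >= d) *)
Definition bvec (d : nat) (B : 'M[R]_d) (k : nat) : 'cV[R]_d :=
  if insub k is Some j then col j B else 0.

(* gsl B k = [:: b_0^*; ...; b_(k-1)^*], Gram--Schmidt vectors *)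
Fixpoint gsl (d : nat) (B : 'M[R]_d) (k : nat) : seq 'cV[R]_d :=
  match k with
  | 0 => [::]
  | k'.+1 =>
    let s := gsl B k' in
    rcons s (bvec B k' -
             \sum_(j < k') (dotv (bvec B k') (nth 0 s j) /
                            dotv (nth 0 s j) (nth 0 s j)) *: nth 0 s j)
  end.

Definition gs (d : nat) (B : 'M[R]_d) (i : nat) : 'cV[R]_d := nth 0 (gsl B i.+1) i.

Definition gsmu (d : nat) (B : 'M[R]_d) (i j : nat) : R :=
  dotv (bvec B i) (gs B j) / dotv (gs B j) (gs B j).

Definition reduced (d : nat) (B : 'M[R]_d) : Prop :=
  (forall i j : nat, (j < i < d)%N -> `|gsmu B i j| <= 1/2) /\
  (forall i : nat, (0 < i < d)%N ->
     dotv (gs B i + gsmu B i i.-1 *: gs B i.-1) (gs B i + gsmu B i i.-1 *: gs B i.-1)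
     >= 3/4 * dotv (gs B i.-1) (gs B i.-1)).

Definition same_lattice (d : nat) (B B' : 'M[R]_d) : Prop :=
  exists U V : 'M[int]_d,
    B' = B *m map_mx (fun z : int => z%:~R) U /\
    B = B' *m map_mx (fun z : int => z%:~R) V.

Definition ILLL_kmax (m n : nat) (qmax : R) : int :=
  Num.ceil (- ((m + n - 1)%:R * (m + n)%:R / (4 * n%:R))
            + m%:R * (ln qmax / ln 2) / n%:R).

Definition ILLL_c (m n : nat) (k : nat) : R :=
  (2 `^ (- ((m + n + 3)%:R / 4) - k%:R + 1)) `^ ((m + n)%:R / m%:R).

Definition ILLL_B0 (m n : nat) (A : 'M[R]_(n, m)) : 'M[R]_(n + m) :=
  block_mx 1%:M A 0 (ILLL_c m n 1)%:M.

Definition ILLL_scale (m n : nat) (B : 'M[R]_(n + m)) : 'M[R]_(n + m) :=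
  col_mx (usubmx B) ((2 `^ ((m + n)%:R / m%:R))^-1 *: dsubmx B).

(* A run of the ILLL-algorithm on input A, qmax:
   Cur k = basis at the start of iteration k, Red k = the reduced basis
   returned by LLL in iteration k (any reduced basis of the same lattice),
   q k = the output m-tuple, read off the first vector of Red k. *)
Definition ILLL_run (m n : nat) (A : 'M[R]_(n, m)) (qmax : R)
    (Cur Red : nat -> 'M[R]_(n + m)) (q : nat -> 'cV[int]_m) : Prop :=
  Cur 1%N = ILLL_B0 A /\
  forall k : nat, (1 <= k)%N -> (k%:Z <= ILLL_kmax m n qmax)%R ->
    [/\ same_lattice (Cur k) (Red k), reduced (Red k),
        (exists p : 'cV[int]_n,
           bvec (Red k) 0 =
           col_mx (A *m map_mx (fun z : int => z%:~R) (q k)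
                   - map_mx (fun z : int => z%:~R) p)
                  (ILLL_c m n k *: map_mx (fun z : int => z%:~R) (q k)))
      & Cur k.+1 = ILLL_scale (Red k)].

End ILLL.

(* Main.v *)
Require Import Defs.
From HB Require Import structures.
From mathcomp Require Import all_boot all_order all_algebra.
From mathcomp Require Import all_classical all_reals all_analysis.
From mathcomp Require Import lra ring zify.
Import Order.TTheory GRing.Theory Num.Theory.
Local Open Scope ring_scope.
Set Implicit Arguments. Unset Strict Implicit. Unset Printing Implicit Defensive.
Section GS.
Variable R : realType.
Variable d : nat.
Implicit Types u v w : 'cV[R]_d.

Lemma dotvC u v : dotv u v = dotv v u.
Proof. by apply: eq_bigr => i _; rewrite mulrC. Qed.

Lemma dotvDl u v w : dotv (u + v) w = dotv u w + dotv v w.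
Proof. by rewrite /dotv -big_split; apply: eq_bigr => i _; rewrite !mxE mulrDl. Qed.

Lemma dotvZl a u w : dotv (a *: u) w = a * dotv u w.
Proof. by rewrite /dotv mulr_sumr; apply: eq_bigr => i _; rewrite !mxE mulrA. Qed.

Lemma dotvNl u w : dotv (- u) w = - dotv u w.
Proof. by rewrite -scaleN1r dotvZl mulN1r. Qed.

Lemma dotvBl u v w : dotv (u - v) w = dotv u w - dotv v w.
Proof. by rewrite dotvDl dotvNl. Qed.

Lemma dotv0l w : dotv 0 w = 0.
Proof. by rewrite /dotv big1 // => i _; rewrite mxE mul0r. Qed.

Lemma dotv_suml (I : Type) (r : seq I) (P : pred I) (F : I -> 'cV[R]_d) w :
  dotv (\sum_(i <- r | P i) F i) w = \sum_(i <- r | P i) dotv (F i) w.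
Proof.
apply: (big_morph (fun u => dotv u w)); first by move=> x y; rewrite dotvDl.
exact: dotv0l.
Qed.

Lemma dotvDr u v w : dotv w (u + v) = dotv w u + dotv w v.
Proof. by rewrite dotvC dotvDl !(dotvC w). Qed.
Lemma dotvZr a u w : dotv w (a *: u) = a * dotv w u.
Proof. by rewrite dotvC dotvZl dotvC. Qed.
Lemma dotvBr u v w : dotv w (u - v) = dotv w u - dotv w v.
Proof. by rewrite dotvC dotvBl !(dotvC w). Qed.

Lemma dotv_ge0 u : 0 <= dotv u u.
Proof. by apply: sumr_ge0 => i _; rewrite -expr2 sqr_ge0. Qed.

Lemma dotv_eq0 u : dotv u u = 0 -> u = 0.
Proof.
move=> /eqP; rewrite psumr_eq0; last by move=> i _; rewrite -expr2 sqr_ge0.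
move=> /allP H; apply/matrixP => i j; rewrite (ord1 j) mxE.
have := H i (mem_index_enum _); rewrite /= -expr2 sqrf_eq0 => /eqP //.
Qed.

Lemma dotv_proj v g a : dotv v g = a * dotv g g -> a ^+ 2 * dotv g g <= dotv v v.
Proof.
move=> H; have := dotv_ge0 (v - a *: g).
rewrite !(dotvBl, dotvBr, dotvZl, dotvZr) (dotvC g v) H; lra.
Qed.

End GS.
Section GS2.
Variable R : realType.
Variable d : nat.
Variable B : 'M[R]_d.

Lemma size_gsl k : size (gsl B k) = k.
Proof. by elim: k => //= k IH; rewrite size_rcons IH. Qed.

Lemma gsl_nth k j : (j < k)%N -> nth 0 (gsl B k) j = gs B j.
Proof.
elim: k => // k IH; rewrite ltnS leq_eqVlt => /orP [/eqP -> //|jk].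
by rewrite /= nth_rcons size_gsl jk IH.
Qed.

Lemma gs_rec i : gs B i = bvec B i -
  \sum_(j < i) (dotv (bvec B i) (gs B j) / dotv (gs B j) (gs B j)) *: gs B j.
Proof.
rewrite /gs /= nth_rcons size_gsl ltnn eqxx; congr (_ - _).
by apply: eq_bigr => j _; rewrite gsl_nth.
Qed.

Lemma bvec_gs i : bvec B i = gs B i + \sum_(j < i) gsmu B i j *: gs B j.
Proof. by rewrite gs_rec subrK. Qed.

Lemma gs0 : gs B 0 = bvec B 0.
Proof. by rewrite gs_rec big_ord0 subr0. Qed.

Lemma gs_orth_lt i j : (j < i)%N -> dotv (gs B i) (gs B j) = 0.
Proof.
elim/ltn_ind: i j => i IH j ji.
have orth l : (l < i)%N -> l != j -> dotv (gs B l) (gs B j) = 0.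
  move=> li lj; case: (ltngtP l j) => [lj'|jl|/eqP]; last by rewrite (negbTE lj).
    by rewrite dotvC; apply: IH.
  by apply: IH.
rewrite {1}gs_rec dotvBl dotv_suml (bigD1 (Ordinal ji)) //= big1; last first.
  by move=> l /= lj; rewrite dotvZl orth // mulr0.
rewrite addr0 dotvZl.
have [/dotv_eq0 ->|nz] := eqVneq (dotv (gs B j) (gs B j)) 0.
  by rewrite dotvC !(dotv0l, mul0r, mulr0, subr0).
by rewrite -mulrA mulVf // mulr1 subrr.
Qed.

Lemma gs_orth i j : i != j -> dotv (gs B i) (gs B j) = 0.
Proof.
case: (ltngtP i j) => [ij|ji|e] //.
  by rewrite dotvC gs_orth_lt. by rewrite gs_orth_lt.
Qed.

Lemma bvec_gs_lt i r : (i < r)%N -> dotv (bvec B i) (gs B r) = 0.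
Proof.
move=> ir; rewrite bvec_gs dotvDl dotv_suml gs_orth ?add0r; last first.
  by rewrite neq_ltn ir.
rewrite big1 // => j _; rewrite dotvZl gs_orth ?mulr0 //.
by rewrite neq_ltn (ltn_trans (ltn_ord j) ir).
Qed.

Lemma bvec_gs_eq r : dotv (bvec B r) (gs B r) = dotv (gs B r) (gs B r).
Proof.
rewrite bvec_gs dotvDl dotv_suml big1 ?addr0 // => j _.
by rewrite dotvZl gs_orth ?mulr0 // neq_ltn ltn_ord.
Qed.

Lemma reduced_step i : reduced B -> (0 < i < d)%N ->
  dotv (gs B i.-1) (gs B i.-1) / 2 <= dotv (gs B i) (gs B i).
Proof.
move=> [H1 H2] hi; have := H2 i hi.
have hmu : `|gsmu B i i.-1| <= 1/2.
  apply: H1; case/andP: hi => h0 hd; rewrite hd andbT.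
  by case: i h0 {hd} => //= i _.
rewrite !(dotvDl, dotvDr, dotvZl, dotvZr).
have o : dotv (gs B i) (gs B i.-1) = 0.
  by apply: gs_orth_lt; case/andP: hi => h0 _; rewrite prednK.
rewrite o (dotvC (gs B i.-1)) o.
have g := dotv_ge0 (gs B i.-1).
move: hmu; rewrite ler_norml => /andP [h h'].
move: (gsmu B i i.-1) h h' => mu h h'.
have hm : 0 <= 1/4 - mu * mu.
  have h1 : 0 <= 1/2 - mu by lra.
  have h2 : 0 <= mu + 1/2 by lra.
  have := mulr_ge0 h1 h2; lra.
have := mulr_ge0 hm g; rewrite !mulr0 !addr0; lra.
Qed.

Lemma reduced_gs_lb i : reduced B -> (i < d)%N ->
  dotv (bvec B 0) (bvec B 0) <= 2 ^+ i * dotv (gs B i) (gs B i).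
Proof.
move=> red; elim: i => [|i IH] hi; first by rewrite gs0 expr0 mul1r.
have := reduced_step red (i:=i.+1); rewrite /= hi => /(_ isT) h.
have p : (0:R) <= 2 ^+ i by rewrite exprn_ge0.
apply: (le_trans (IH (ltnW hi))); rewrite exprS (mulrC 2) -mulrA.
by apply: ler_wpM2l => //; lra.
Qed.

End GS2.
Section Lat.
Variable R : realType.
Variable d : nat.
Variable B : 'M[R]_d.

Lemma bvec_ord (i : 'I_d) : bvec B i = col i B.
Proof. by rewrite /bvec valK. Qed.

Lemma dotv_mul (z : 'cV[R]_d) g :
  dotv (B *m z) g = \sum_(i < d) z i 0 * dotv (bvec B i) g.
Proof.
rewrite /dotv; under eq_bigr do rewrite mxE big_distrl.
rewrite exchange_big; apply: eq_bigr => i _ /=; rewrite bvec_ord mulr_sumr.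
by apply: eq_bigr => k _ /=; rewrite !mxE mulrA (mulrC (z i 0)).
Qed.

Lemma int_sqr_ge1 (x : int) : x != 0 -> 1 <= (x%:~R : R) ^+ 2.
Proof.
move=> nz; have : (1 <= x)%R || (x <= -1)%R by lia.
case/orP => h.
  have h' : 1 <= (x%:~R : R) by rewrite (ler_int R 1 x).
  nra.
have h' : (x%:~R : R) <= -1 by rewrite (ler_int R x (-1)).
nra.
Qed.

Lemma lattice_lb (z : 'cV[int]_d) : reduced B ->
  B *m map_mx (fun x : int => x%:~R) z != 0 ->
  dotv (bvec B 0) (bvec B 0) <=
  2 ^+ d.-1 * dotv (B *m map_mx (fun x : int => x%:~R) z)
                   (B *m map_mx (fun x : int => x%:~R) z).
Proof.
move=> red nz.
have [i0 hi0] : exists i0 : 'I_d, z i0 0 != 0.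
  case: (pickP (fun i : 'I_d => z i 0 != 0)) => [i hi|h]; first by exists i.
  move: nz; suff -> : map_mx (fun x : int => (x%:~R : R)) z = 0 by rewrite mulmx0 eqxx.
  apply/matrixP => i j; rewrite (ord1 j) !mxE.
  by have := h i; rewrite /= => /negbFE/eqP ->.
set v := B *m _.
case: (@arg_maxnP _ i0 (fun i : 'I_d => z i 0 != 0) (fun i : 'I_d => val i) hi0) => r hr hmax.
have e : dotv v (gs B r) = (z r 0)%:~R * dotv (gs B r) (gs B r).
  rewrite /v dotv_mul (bigD1 r) //= big1 ?addr0; first by rewrite mxE bvec_gs_eq.
  move=> j jr; case: (ltngtP j r) => [jlt|rlt|/val_inj e]; last by rewrite e eqxx in jr.
    by rewrite bvec_gs_lt // mulr0.
  have : z j 0 == 0.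
    apply/negPn/negP => hj; have := hmax j hj; rewrite /= => /(leq_trans rlt); rewrite ltnn //.
  by move=> /eqP ez; rewrite mxE ez mul0r.
have h1 := dotv_proj e.
have h2 := int_sqr_ge1 hr.
have hg := dotv_ge0 (gs B r).
have h3 : dotv (gs B r) (gs B r) <= dotv v v.
  apply: le_trans h1; rewrite -[X in X <= _]mul1r; exact: ler_wpM2r.
have hd : (r < d)%N by [].
apply: (le_trans (reduced_gs_lb red hd)).
apply: ler_pM; rewrite ?exprn_ge0 //.
by rewrite ler_eXn2l ?ltr1n //; lia.
Qed.

End Lat.
Section Det.
Variable R : realType.
Variable d : nat.
Variable B : 'M[R]_d.

Definition gsG : 'M[R]_d := \matrix_(k, i) gs B i k 0.
Definition gsM : 'M[R]_d :=
  \matrix_(j, i) (if (j < i)%N then gsmu B i j else (j == i)%:R).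

Lemma B_GM : B = gsG *m gsM.
Proof.
apply/matrixP => k i; rewrite !mxE.
have -> : B k i = bvec B i k 0 by rewrite bvec_ord mxE.
rewrite bvec_gs mxE summxE.
rewrite (big_ord_widen d (fun j => (gsmu B i j *: gs B j) k 0) (ltnW (ltn_ord i))).
have -> : \sum_(j < d) gsG k j * gsM j i =
  \sum_(j < d) ((if j == i then gs B i k 0 else 0) +
               (if (j < i)%N then (gsmu B i j *: gs B j) k 0 else 0)).
  apply: eq_bigr => j _; rewrite !mxE.
  case: (ltngtP j i) => [ji|ij|/val_inj ->].
  - have /negbTE -> : j != i by rewrite neq_ltn ji.
    by rewrite add0r mulrC.
  - have /negbTE -> : j != i by rewrite neq_ltn ij orbT.
    by rewrite mulr0 addr0.
  - by rewrite eqxx mulr1 addr0.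
rewrite big_split /= [X in _ = X + _](bigD1 i) //= eqxx.
rewrite [X in _ = _ + X + _]big1 ?addr0; last by move=> j /= jn; rewrite (negbTE jn).
by rewrite big_mkcond.
Qed.

Lemma det_gsM : \det gsM = 1.
Proof.
rewrite -det_tr det_trig; last first.
  apply/is_trig_mxP => i j ij; rewrite !mxE.
  rewrite ltnNge (ltnW ij) /=.
  by have /negbTE -> : j != i by rewrite neq_ltn ij orbT.
by rewrite big1 // => i _; rewrite !mxE ltnn eqxx.
Qed.

Lemma det_gs : \det B ^+ 2 = \prod_(i < d) dotv (gs B i) (gs B i).
Proof.
have -> : \det B = \det gsG by rewrite {1}B_GM det_mulmx det_gsM mulr1.
have -> : \det gsG ^+ 2 = \det (gsG^T *m gsG) by rewrite det_mulmx det_tr expr2.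
have tg : forall i j : 'I_d, (gsG^T *m gsG) i j = dotv (gs B i) (gs B j).
  by move=> i j; rewrite !mxE; apply: eq_bigr => k _; rewrite !mxE.
rewrite det_trig; first by apply: eq_bigr => i _; rewrite tg.
apply/is_trig_mxP => i j ij; rewrite tg gs_orth //.
by rewrite neq_ltn ij.
Qed.

Lemma det_lb : reduced B ->
  dotv (bvec B 0) (bvec B 0) ^+ d <= 2 ^+ (\sum_(i < d) i) * \det B ^+ 2.
Proof.
move=> red; rewrite det_gs -prodrXr -big_split /=.
rewrite -[X in _ ^+ X <= _](card_ord d) -prodr_const.
apply: ler_prod => i _; rewrite dotv_ge0 /=.
exact: reduced_gs_lb.
Qed.

End Det.
Section Helpers.
Variable R : realType.

Lemma sq_le (x y : R) : 0 <= y -> x ^+ 2 <= y ^+ 2 -> `|x| <= y.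
Proof.
move=> y0 h; have e := real_normK (num_real x).
have a0 := normr_ge0 x.
rewrite -e in h; nra.
Qed.

Lemma dotv_col (a b : nat) (u : 'cV[R]_a) (w : 'cV[R]_b) :
  dotv (col_mx u w) (col_mx u w) = dotv u u + dotv w w.
Proof.
rewrite /dotv big_split_ord; congr (_ + _); apply: eq_bigr => i _.
  by rewrite col_mxEu. by rewrite col_mxEd.
Qed.

Lemma dotv_term (a : nat) (u : 'cV[R]_a) i : u i 0 ^+ 2 <= dotv u u.
Proof.
rewrite /dotv (bigD1 i) //= -expr2 lerDl sumr_ge0 // => j _.
by rewrite -expr2 sqr_ge0.
Qed.

Lemma dotv_ub (a : nat) (u : 'cV[R]_a) K : (forall i, u i 0 ^+ 2 <= K) ->
  dotv u u <= a%:R * K.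
Proof.
move=> h; rewrite /dotv mulr_natl -[X in K *+ X](card_ord a) -sumr_const.
by apply: ler_sum => i _; rewrite -expr2.
Qed.

Lemma le_bigmaxr (a : nat) (F : 'I_a -> R) i : F i <= \big[Num.max/0]_(j < a) F j.
Proof. by rewrite (bigD1 i) //= le_max lexx. Qed.

Lemma bigmaxr_le (a : nat) (F : 'I_a -> R) b : 0 <= b -> (forall i, F i <= b) ->
  \big[Num.max/0]_(j < a) F j <= b.
Proof.
move=> b0 h; apply: (big_ind (fun x => x <= b)) => //.
by move=> x y hx hy; rewrite ge_max hx hy.
Qed.

Lemma dnint_le (x : R) (z : int) : dnint x <= `|x - z%:~R|.
Proof.
rewrite /dnint.
case: (lerP (z%:~R) x) => h.
  have hf : z <= Num.floor x by rewrite floor_ge_int.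
  have hf' : (z%:~R : R) <= (Num.floor x)%:~R by rewrite ler_int.
  rewrite ge_min; apply/orP; left; lra.
have hc : Num.ceil x <= z by rewrite ceil_le_int ltW.
have hc' : ((Num.ceil x)%:~R : R) <= z%:~R by rewrite ler_int.
rewrite ge_min; apply/orP; right; lra.
Qed.

Definition nint (x : R) : int :=
  if x - (Num.floor x)%:~R <= (Num.ceil x)%:~R - x then Num.floor x else Num.ceil x.

Lemma dnint_eq (x : R) : `|x - (nint x)%:~R| = dnint x.
Proof.
rewrite /dnint /nint; have h1 := floor_le x; have h2 := ceil_ge x.
case: (lerP (x - (Num.floor x)%:~R) ((Num.ceil x)%:~R - x)) => h.
  by rewrite ger0_norm // subr_ge0.
rewrite ler0_norm ?subr_le0 //; lra.
Qed.

End Helpers.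
Definition K0f (R : realType) (m n : nat) (delta : R) (s : nat) : R :=
  1 - (m%:R + n%:R + 3) / 4 + m%:R / (2 * (m%:R + n%:R)) *
    ln (m%:R / (n%:R * delta ^+ 2)) / ln 2 + m%:R / n%:R * ln (s%:R : R) / ln 2.
Definition kIf (R : realType) (m n : nat) (delta : R) (s : nat) : nat :=
  if (Num.ceil (K0f m n delta s) <= 1)%R then 1%N else `|Num.ceil (K0f m n delta s)|%N.

Section Arith.
Variable R : realType.
Variables (m n : nat) (delta : R) (s : nat) (qmax : R).
Hypotheses (hm : (1 <= m)%N) (hn : (1 <= n)%N) (hd : 0 < delta < 1) (hs : (1 < s)%N).
Hypothesis Hs : s%:R > 2 `^ ((m + n - 1)%:R * n%:R / (4 * m%:R))
         * (n%:R * delta ^+ 2 / m%:R) `^ (n%:R / (2 * (m + n)%:R)).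
Hypothesis Hq : qmax >= 2 `^ (((m ^ 2 + m * (n - 1) + 4 * n)%N)%:R / (4 * m%:R))
          * (m%:R / (n%:R * delta ^+ 2)) `^ (n%:R / (2 * (m + n)%:R)) * s%:R.

Local Notation M := (m%:R : R).
Local Notation N := (n%:R : R).
Local Notation L2 := (ln (2 : R)).
Local Notation sg := (ln (s%:R : R)).
Local Notation mu := (ln (m%:R / (n%:R * delta ^+ 2) : R)).

Lemma hM : 0 < M. Proof. by rewrite ltr0n. Qed.
Lemma hN : 0 < N. Proof. by rewrite ltr0n. Qed.
Lemma hL2 : 0 < L2. Proof. by apply: ln_gt0; lra. Qed.
Lemma hS : 1 < (s%:R : R). Proof. by rewrite ltr1n. Qed.
Lemma hdel : 0 < delta. Proof. by case/andP: hd. Qed.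

Lemma pos_ratio : 0 < M / (N * delta ^+ 2).
Proof.
have := hM; have := hN; have := hdel => h1 h2 h3.
by apply: divr_gt0 => //; apply: mulr_gt0 => //; apply: exprn_gt0.
Qed.

Lemma natD : ((m + n)%:R : R) = M + N. Proof. by rewrite natrD. Qed.
Lemma natD1 : ((m + n - 1)%:R : R) = M + N - 1.
Proof. by rewrite natrB ?natrD //; apply: (leq_trans hm); rewrite leq_addr. Qed.
Lemma natD3 : ((m + n + 3)%:R : R) = M + N + 3. Proof. by rewrite !natrD. Qed.
Lemma natQ : (((m ^ 2 + m * (n - 1) + 4 * n)%N)%:R : R) = M ^+ 2 + M * (N - 1) + 4 * N.
Proof. rewrite !natrD !natrM natrB // addr0; ring. Qed.

Lemma lnHs : sg > (M + N - 1) * N / (4 * M) * L2 - N / (2 * (M + N)) * mu.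
Proof.
have p := pos_ratio.
have e : N * delta ^+ 2 / M = (M / (N * delta ^+ 2))^-1 by rewrite invf_div.
move: Hs; rewrite e -ltr_ln ?posrE; last 2 first.
- by apply: mulr_gt0; apply: powR_gt0; rewrite ?invr_gt0.
- by rewrite ltr0n; lia.
rewrite lnM ?posrE; last 2 first.
- by apply: powR_gt0.
- by apply: powR_gt0; rewrite ?invr_gt0.
rewrite !ln_powR lnV ?posrE // natD1 natD; lra.
Qed.

Lemma lnHq : ln qmax >= (M ^+ 2 + M * (N - 1) + 4 * N) / (4 * M) * L2
                        + N / (2 * (M + N)) * mu + sg.
Proof.
have p := pos_ratio.
have qp : 0 < qmax.
  apply: lt_le_trans Hq; apply: mulr_gt0; first by apply: mulr_gt0; apply: powR_gt0.
  by rewrite ltr0n; lia.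
have H := Hq.
set a1 := 2 `^ _ in H; set a2 := _ `^ _ in H.
have p1 : 0 < a1 by apply: powR_gt0.
have p2 : 0 < a2 by apply: powR_gt0.
have p3 : (0:R) < s%:R by rewrite ltr0n; lia.
move: H; rewrite -ler_ln ?posrE ?mulr_gt0 //.
rewrite (@lnM _ (a1 * a2) s%:R) ?posrE ?mulr_gt0 // (@lnM _ a1 a2) ?posrE //.
rewrite /a1 /a2 !ln_powR natQ natD; lra.
Qed.

Lemma lnMp (x y : R) : 0 < x -> 0 < y -> ln (x * y) = ln x + ln y.
Proof. by move=> hx hy; rewrite lnM ?posrE. Qed.
Lemma lnXp (x : R) k : 0 < x -> ln (x ^+ k) = k%:R * ln x.
Proof. by move=> hx; rewrite lnXn // mulr_natl. Qed.
Lemma le_ln_pos (x y : R) : 0 < x -> 0 < y -> ln x <= ln y -> x <= y.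
Proof. by move=> hx hy; rewrite ler_ln ?posrE. Qed.

Local Notation K0 := (K0f m n delta s).

Lemma K0_pos : 0 < K0.
Proof.
have h := lnHs; have hM := hM; have hN := hN; have hL := hL2.
have e : K0 = M / (N * L2) * (sg - ((M + N - 1) * N / (4 * M) * L2 - N / (2 * (M + N)) * mu)).
  rewrite /K0f; field; rewrite ?(gt_eqF hM, gt_eqF hN, gt_eqF hL) //=.
  by rewrite gt_eqF // addr_gt0.
rewrite e; apply: mulr_gt0; first by rewrite divr_gt0 // mulr_gt0.
by rewrite subr_gt0.
Qed.


Local Notation kk := (Num.ceil K0).
Local Notation kI := (kIf m n delta s).

Lemma kI_ge1 : (1 <= kI)%N.
Proof. rewrite /kIf; case: ifP => // /negbT; rewrite -ltNge => h; lia. Qed.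

Lemma kI_nat : ~~ (kk <= 1)%R -> ((`|kk|%N)%:R : R) = kk%:~R.
Proof.
move=> h; rewrite natr_absz ger0_norm //.
by move: h; rewrite -ltNge => h; lia.
Qed.

Lemma kI_ge : K0 <= kI%:R.
Proof.
rewrite /kIf; case: ifP => h; last by rewrite kI_nat ?h // ceil_ge.
apply: (le_trans (ceil_ge _)); rewrite -[1%:R]/(1%:~R : R) ler_int //.
Qed.

Lemma kI_lt : kI = 1%N \/ kI%:R < K0 + 1.
Proof.
rewrite /kIf; case: ifP => h; first by left.
right; rewrite kI_nat ?h //.
have := ceil_itv K0; rewrite intrB => /andP [h1 _]; lra.
Qed.

Lemma kI_kmax : (kI%:Z <= ILLL_kmax m n qmax)%R.
Proof.
rewrite /ILLL_kmax natD1 natD.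
set X := (- _ + _).
have hX : K0 + 1 <= X.
  have h := lnHq; have hM := hM; have hN := hN; have hL := hL2.
  have e : X - (K0 + 1) = M / (N * L2) * (ln qmax -
     ((M ^+ 2 + M * (N - 1) + 4 * N) / (4 * M) * L2 + N / (2 * (M + N)) * mu + sg)).
    rewrite /X /K0f; field; rewrite ?(gt_eqF hM, gt_eqF hN, gt_eqF hL) //=.
    by rewrite gt_eqF // addr_gt0.
  have : 0 <= X - (K0 + 1).
    by rewrite e; apply: mulr_ge0; [rewrite ltW // divr_gt0 // mulr_gt0|rewrite subr_ge0].
  lra.
have hK := K0_pos.
rewrite /kIf; case: ifP => h.
  have : (1 : R) < (Num.ceil X)%:~R by apply: (lt_le_trans _ (ceil_ge X)); lra.
  rewrite -[1 : R]/(1%:~R : R) ltr_int => h'; exact: ltW.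
rewrite gez0_abs; last by move: h => /negbT; rewrite -ltNge => h; lia.
by apply: le_ceil; lra.
Qed.


Lemma c_pos k : 0 < ILLL_c R m n k.
Proof. by apply: powR_gt0; apply: powR_gt0. Qed.

Lemma ln_c k : ln (ILLL_c R m n k) = (M + N) / M * ((- ((M + N + 3) / 4) - k%:R + 1) * L2).
Proof. by rewrite /ILLL_c !ln_powR natD3 natD. Qed.

Lemma sumI d : ((\sum_(i < d) i)%N%:R : R) * 2 = d%:R * (d%:R - 1).
Proof.
elim: d => [|d IH]; first by rewrite big_ord0 mul0r mul0r.
rewrite big_ord_recr /= natrD mulrDl IH -addn1 natrD; ring.
Qed.

Lemma R1 k (x : R) : 0 <= x ->
  x ^+ (n + m) <= 2 ^+ (\sum_(i < n + m) i) * (ILLL_c R m n k ^+ m) ^+ 2 ->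
  x <= 2 `^ (- (2 * k%:R)).
Proof.
move=> x0 h.
have [->|xp] := eqVneq x 0; first exact: powR_ge0.
have xp' : 0 < x by rewrite lt_def xp x0.
have cp := c_pos k.
apply: le_ln_pos; [done| by apply: powR_gt0 |].
move: h; rewrite -ler_ln ?posrE; last 2 first.
- by rewrite exprn_gt0.
- by rewrite mulr_gt0 // exprn_gt0 // exprn_gt0.
rewrite lnMp ?exprn_gt0 // !lnXp ?exprn_gt0 // ln_powR ln_c.
have hsum := sumI (n + m); rewrite natrD in hsum.
set S := ((\sum_(i < n + m) i)%N)%:R in hsum *.
have hM := hM; have hN := hN; have hL := hL2.
rewrite natrD => h.
have e : S * L2 + 2%:R * (m%:R * ((M + N) / M * ((- ((M + N + 3) / 4) - k%:R + 1) * L2)))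
        = (N + M) * (- (2 * k%:R) * L2).
  have -> : S = (N + M) * (N + M - 1) / 2 by rewrite -hsum mulfK.
  by field; rewrite gt_eqF.
rewrite e in h.
have hNM : 0 < N + M by rewrite addr_gt0.
by rewrite -(ler_pM2l hNM).
Qed.


Lemma ln_mu : mu = ln M - ln N - 2 * ln delta.
Proof.
have hM := hM; have hN := hN; have hdl := hdel.
rewrite ln_div ?posrE ?mulr_gt0 ?exprn_gt0 // lnMp ?exprn_gt0 // lnXp //; lra.
Qed.

Lemma R2 k : K0 <= k%:R ->
  ILLL_c R m n k ^+ 2 * (M * s%:R ^+ 2) <= N * (delta * s%:R `^ (- (M / N))) ^+ 2.
Proof.
move=> hk.
have hM := hM; have hN := hN; have hdl := hdel; have hL := hL2; have cp := c_pos k.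
have sp : (0 : R) < s%:R by rewrite ltr0n; lia.
have sp' : 0 < (s%:R : R) `^ (- (M / N)) by apply: powR_gt0.
apply: le_ln_pos; first by rewrite !mulr_gt0 ?exprn_gt0.
  by rewrite mulr_gt0 ?exprn_gt0 ?mulr_gt0.
rewrite !lnMp ?exprn_gt0 ?mulr_gt0 // ln_powR.
have := ln_mu => emu; have := ln_c k => elc.
have e : ln N + 2 * (ln delta + - (M / N) * sg) -
   (2 * ln (ILLL_c R m n k) + (ln M + 2 * sg))
   = 2 * (M + N) / M * L2 * (k%:R - K0).
  rewrite elc /K0f emu. field.
  by rewrite ?(gt_eqF hM, gt_eqF hN, gt_eqF hL) /= ?(gt_eqF (addr_gt0 hM hN)).
have : 0 <= 2 * (M + N) / M * L2 * (k%:R - K0).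
  apply: mulr_ge0; last lra.
  apply: mulr_ge0; last exact: ltW.
  apply: divr_ge0; last exact: ltW.
  lra.
rewrite -e; lra.
Qed.

Lemma R3 k : (k = 1%N \/ k%:R < K0 + 1) ->
  2 `^ (- k%:R) <= ILLL_c R m n k *
    (2 `^ (((m ^ 2 + m * (n - 1) + 4 * n)%N)%:R / (4 * m%:R))
     * (m%:R / (n%:R * delta ^+ 2)) `^ (n%:R / (2 * (m + n)%:R)) * s%:R).
Proof.
move=> hk.
have hM := hM; have hN := hN; have hdl := hdel; have hL := hL2; have cp := c_pos k.
have sp : (0 : R) < s%:R by rewrite ltr0n; lia.
have p := pos_ratio.
apply: le_ln_pos; first by apply: powR_gt0.
  by rewrite !mulr_gt0 ?powR_gt0.
rewrite !lnMp ?mulr_gt0 ?powR_gt0 // ln_c !ln_powR natQ natD -subr_ge0.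
set f := (X in 0 <= X).
case: hk => [ek|hk].
  have h := lnHs.
  have e : f = sg - ((M + N - 1) * N / (4 * M) * L2 - N / (2 * (M + N)) * mu).
    rewrite /f ek; field.
    by rewrite ?(gt_eqF hM, gt_eqF hN, gt_eqF hL) /= ?(gt_eqF (addr_gt0 hM hN)).
  rewrite e; lra.
have e : f = N / M * L2 * (K0 + 1 - k%:R).
  rewrite /f /K0f; field.
  by rewrite ?(gt_eqF hM, gt_eqF hN, gt_eqF hL) /= ?(gt_eqF (addr_gt0 hM hN)).
rewrite e; apply: mulr_ge0; first by rewrite mulr_ge0 // ltW // divr_gt0.
lra.
Qed.

End Arith.
Section Main.
Variable R : realType.
Variables (m n : nat) (A : 'M[R]_(n, m)).
Hypothesis hm : (1 <= m)%N.

Local Notation c k := (ILLL_c R m n k).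
Definition tt : R := (2 `^ ((m + n)%:R / m%:R))^-1.
Local Notation t := tt.
Definition Bk k : 'M[R]_(n + m) := block_mx 1%:M A 0 (c k)%:M.
Definition Dm : 'M[R]_(n + m) := block_mx 1%:M 0 0 t%:M.

Lemma scaleE (B : 'M[R]_(n + m)) : ILLL_scale B = Dm *m B.
Proof.
rewrite /ILLL_scale /Dm -[in RHS](vsubmxK B) mul_block_col !mul1mx !mul0mx addr0 add0r.
by rewrite mul_scalar_mx.
Qed.

Lemma c_succ k : c k.+1 = t * c k.
Proof.
rewrite /tt /ILLL_c -!powRrM mulrC -powRN -powRD; last by rewrite pnatr_eq0 implybT.
congr (_ `^ _); rewrite -addn1 natrD; ring.
Qed.

Lemma DmBk k : Dm *m Bk k = Bk k.+1.
Proof.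
rewrite /Dm /Bk mulmx_block !mul_scalar_mx !scale1r !mul0mx !scaler0 !addr0 !add0r.
by rewrite c_succ scale_scalar_mx.
Qed.

Lemma det_Dm : \det Dm = t ^+ m.
Proof. by rewrite /Dm det_ublock det1 det_scalar mul1r. Qed.

Lemma det_Bk k : \det (Bk k) = c k ^+ m.
Proof. by rewrite /Bk det_ublock det1 det_scalar mul1r. Qed.

Lemma t_pos : 0 < t.
Proof. by rewrite /tt invr_gt0 powR_gt0. Qed.

Lemma c_pos' k : 0 < c k.
Proof. by apply: powR_gt0; apply: powR_gt0. Qed.

Lemma invariant (qmax : R) Cur Red q : ILLL_run A qmax Cur Red q ->
  forall k, (1 <= k)%N -> (k%:Z <= ILLL_kmax m n qmax)%R ->
  exists Z : 'M[int]_(n + m),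
    [/\ Bk k = Cur k *m map_mx (fun x : int => x%:~R) Z,
        \det (Cur k) != 0 & `|\det (Cur k)| <= c k ^+ m].
Proof.
move=> [C1 run]; elim=> [//|k IH] _ hk.
have [->|k0] := eqVneq k 0%N.
  exists 1; rewrite C1 /ILLL_B0 -/(Bk 1) map_mx1 mulmx1 det_Bk.
  split=> //; last by rewrite ger0_norm // exprn_ge0 // ltW // c_pos'.
  by rewrite expf_neq0 // gt_eqF // c_pos'.
have k1 : (1 <= k)%N by rewrite lt0n.
have hk' : (k%:Z <= ILLL_kmax m n qmax)%R.
  by apply: le_trans hk; rewrite lez_nat.
have [Z [eZ dC hC]] := IH k1 hk'.
have [[U [V [eU eV]]] red _ eS] := run k k1 hk'.
exists (V *m Z); rewrite eS scaleE det_mulmx det_Dm.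
have dR : \det (Red k) != 0.
  by move: dC; rewrite eV det_mulmx mulf_eq0 negb_or => /andP [].
split.
- by rewrite -DmBk eZ eV map_mxM !mulmxA.
- by rewrite mulf_neq0 // expf_neq0 // gt_eqF // t_pos.
have hV : 1 <= `|\det (map_mx (fun x : int => (x%:~R : R)) V)|.
  rewrite det_map_mx -intr_norm.
  have : \det V != 0.
    by move: dC; rewrite eV det_mulmx det_map_mx mulf_eq0 negb_or intr_eq0 => /andP [].
  move=> nz; have : (1 <= `|\det V|)%R by lia.
  by rewrite -(ler_int R).
have hRC : `|\det (Red k)| <= `|\det (Cur k)|.
  rewrite eV det_mulmx normrM; rewrite -[X in X <= _]mulr1.
  exact: (ler_pM (normr_ge0 _) ler01 (lexx _) hV).
have tp := t_pos.
rewrite normrM c_succ exprMn ger0_norm; last by rewrite exprn_ge0 // ltW.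
apply: ler_wpM2l; first by rewrite exprn_ge0 // ltW.
exact: le_trans hRC hC.
Qed.

End Main.

Unset Implicit Arguments. Set Strict Implicit.

Theorem lemma4 (R : realType) (m n : nat) (A : 'M[R]_(n, m)) (delta : R)
    (s : nat) (sv : 'I_m -> int) (qmax : R)
    (Cur Red : nat -> 'M[R]_(n + m)) (q : nat -> 'cV[int]_m) :
  (1 <= m)%N -> (1 <= n)%N ->
  0 < delta < 1 -> (1 < s)%N ->
  s = (\max_(j < m) `|sv j|%N)%N ->
  s%:R > 2 `^ ((m + n - 1)%:R * n%:R / (4 * m%:R))
         * (n%:R * delta ^+ 2 / m%:R) `^ (n%:R / (2 * (m + n)%:R)) ->
  \big[Num.max/0]_(i < n) dnint (\sum_(j < m) (sv j)%:~R * A i j)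
     <= delta * s%:R `^ (- (m%:R / n%:R)) ->
  1 < qmax ->
  qmax >= 2 `^ (((m ^ 2 + m * (n - 1) + 4 * n)%N)%:R / (4 * m%:R))
          * (m%:R / (n%:R * delta ^+ 2)) `^ (n%:R / (2 * (m + n)%:R)) * s%:R ->
  ILLL_run A qmax Cur Red q ->
  exists k : nat, [/\ (1 <= k)%N, k%:Z <= ILLL_kmax m n qmax,
    (\max_(j < m) `|q k j ord0|%N)%:R
      <= 2 `^ (((m ^ 2 + m * (n - 1) + 4 * n)%N)%:R / (4 * m%:R))
         * (m%:R / (n%:R * delta ^+ 2)) `^ (n%:R / (2 * (m + n)%:R)) * s%:R
    & \big[Num.max/0]_(i < n) dnint (\sum_(j < m) (q k j ord0)%:~R * A i j)
      <= 2 `^ ((m + n)%:R / 2) * Num.sqrt n%:R * delta * s%:R `^ (- (m%:R / n%:R))].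
Proof.
move=> hm hn hd hs es Hs Hmax hq1 Hq run.
have k1 := kI_ge1 hm hn hd hs Hs Hq.
have kK := kI_kmax hm hn hd hs Hs Hq.
have kge := kI_ge hm hn hd hs Hs Hq.
have klt := kI_lt hm hn hd hs Hs Hq.
move: k1 kK kge klt; set k := kIf m n delta s => k1 kK kge klt.
have [Z [eZ dC hC]] := invariant hm run k1 kK.
have [_ runk] := run.
have [[U [V [eU eV]]] red [p ep] _] := runk k k1 kK.
have cp : 0 < ILLL_c R m n k := c_pos R m n k.
move: cp hC ep; set c := ILLL_c R m n k => cp hC ep.
set Q := 2 `^ _ * _ * _.
set b := bvec (Red k) 0 in ep.
have hdel : 0 < delta by case/andP: hd.
have hR : `|\det (Red k)| <= c ^+ m.
  apply: le_trans hC.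
  rewrite eV det_mulmx normrM -[X in X <= _]mulr1.
  apply: (ler_pM (normr_ge0 _) ler01 (lexx _)).
  rewrite det_map_mx -intr_norm.
  have : \det V != 0.
    by move: dC; rewrite eV det_mulmx det_map_mx mulf_eq0 negb_or intr_eq0 => /andP [].
  move=> nz; have : (1 <= `|\det V|)%R by lia.
  by rewrite -(ler_int R).
have hdet : dotv b b ^+ (n + m) <= 2 ^+ (\sum_(i < n + m) i) * (c ^+ m) ^+ 2.
  apply: le_trans (det_lb red) _.
  apply: ler_wpM2l; first exact: exprn_ge0.
  rewrite -(real_normK (num_real (\det (Red k)))) !expr2.
  by apply: ler_pM.
have hb : dotv b b <= 2 `^ (- (2 * k%:R)) := R1 hm hn (dotv_ge0 b) hdet.
have e2k : 2 `^ (- (2 * k%:R)) = (2 `^ (- k%:R) : R) ^+ 2.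
  by rewrite -powR_mulrn ?powR_ge0 // -powRrM; congr (_ `^ _); ring.
exists k; split => //.
  apply: (big_ind (fun x : nat => (x%:R : R) <= Q)).
  - by rewrite /Q !mulr_ge0 ?powR_ge0.
  - by move=> x y hx hy; case: (leqP x y).
  move=> j _.
  have h1 : (c * (q k j 0)%:~R) ^+ 2 <= dotv b b.
    rewrite ep dotv_col.
    have := dotv_ge0 (A *m map_mx (fun x : int => (x%:~R : R)) (q k) - map_mx (fun x : int => (x%:~R : R)) p).
    have := dotv_term (c *: map_mx (fun x : int => (x%:~R : R)) (q k)) j.
    rewrite !mxE; lra.
  have h2 : `|c * (q k j 0)%:~R| <= 2 `^ (- k%:R).
    by apply: sq_le; [exact: powR_ge0 | rewrite -e2k; exact: le_trans h1 hb].
  have h3 := R3 hm hn hd hs Hs Hq klt.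
  rewrite natr_absz intr_norm -(ler_pM2l cp).
  rewrite normrM (ger0_norm (ltW cp)) in h2.
  exact: le_trans h2 h3.
pose xs := fun i : 'I_n => \sum_(j < m) (sv j)%:~R * A i j.
pose pp : 'cV[int]_n := \col_i nint (xs i).
pose svc : 'cV[int]_m := \col_j sv j.
pose w : 'cV[int]_(n + m) := col_mx (- pp) svc.
pose v := col_mx (A *m map_mx (fun x : int => (x%:~R : R)) svc - map_mx (fun x : int => (x%:~R : R)) pp) (c *: map_mx (fun x : int => (x%:~R : R)) svc).
have ev : v = Red k *m map_mx (fun x : int => (x%:~R : R)) (V *m Z *m w).
  rewrite !map_mxM mulmxA mulmxA -eV -eZ /Bk /v /w.
  rewrite map_col_mx mul_block_col mul1mx mul0mx add0r mul_scalar_mx map_mxN.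
  by rewrite addrC.
have [j0 hj0] : exists j0 : 'I_m, sv j0 != 0.
  case: (pickP (fun j : 'I_m => sv j != 0)) => [j hj|h]; first by exists j.
  move: hs; rewrite es big1 // => j _.
  by have := h j; rewrite /= => /negbFE/eqP ->.
have vnz : Red k *m map_mx (fun x : int => (x%:~R : R)) (V *m Z *m w) != 0.
  rewrite -ev; apply/negP => /eqP v0.
  have := congr1 (fun M : 'M[R]_(n + m, 1) => M (rshift n j0) 0) v0.
  rewrite /v col_mxEd !mxE => /eqP; rewrite mulf_eq0 intr_eq0 (negbTE hj0) orbF.
  by rewrite gt_eqF.
have hL := lattice_lb red vnz; rewrite -ev -/b in hL.
set eps := delta * s%:R `^ (- (m%:R / n%:R)) in Hmax *.
have eps0 : 0 <= eps by apply: mulr_ge0; [exact: ltW | exact: powR_ge0].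
have hv : dotv v v <= 2 * (n%:R * eps ^+ 2).
  rewrite /v dotv_col.
  have ht : dotv (A *m map_mx (fun x : int => (x%:~R : R)) svc - map_mx (fun x : int => (x%:~R : R)) pp) (A *m map_mx (fun x : int => (x%:~R : R)) svc - map_mx (fun x : int => (x%:~R : R)) pp)
            <= n%:R * eps ^+ 2.
    apply: dotv_ub => i.
    have -> : (A *m map_mx (fun x : int => (x%:~R : R)) svc - map_mx (fun x : int => (x%:~R : R)) pp) i 0 = xs i - (nint (xs i))%:~R.
      rewrite !mxE /xs; congr (_ - _); apply: eq_bigr => j _; rewrite !mxE mulrC //.
    rewrite -(real_normK (num_real _)) dnint_eq !expr2.
    have hx : dnint (xs i) <= eps by apply: le_trans (le_bigmaxr _ i) Hmax.
    have hx0 : 0 <= dnint (xs i).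
      by rewrite -dnint_eq normr_ge0.
    by apply: ler_pM.
  have hb' : dotv (c *: map_mx (fun x : int => (x%:~R : R)) svc) (c *: map_mx (fun x : int => (x%:~R : R)) svc) <= m%:R * (c ^+ 2 * s%:R ^+ 2).
    apply: dotv_ub => j; rewrite !mxE exprMn.
    apply: ler_wpM2l; first exact: sqr_ge0.
    rewrite -(real_normK (num_real _)) -intr_norm -natr_absz.
    have : (`|sv j| <= s)%N by rewrite es (bigD1 j) //= leq_max leqnn.
    rewrite -(ler_nat R) => h; rewrite !expr2; apply: ler_pM => //.
  have h2 := R2 hm hn hd hs Hs Hq kge.
  have : m%:R * (c ^+ 2 * s%:R ^+ 2) <= n%:R * eps ^+ 2.
    have e : m%:R * (c ^+ 2 * s%:R ^+ 2) = c ^+ 2 * (m%:R * s%:R ^+ 2) by ring.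
    by rewrite e; exact: h2.
  lra.
have hE2 : 2 ^+ (n + m).-1 * (2 * (n%:R * eps ^+ 2)) =
   (2 `^ ((m + n)%:R / 2) * Num.sqrt n%:R * delta * s%:R `^ (- (m%:R / n%:R))) ^+ 2.
  have e1 : (2 `^ ((m + n)%:R / 2) : R) ^+ 2 = 2 ^+ (n + m).
    rewrite -(@powR_mulrn R (2 `^ ((m + n)%:R / 2)) 2) ?powR_ge0 // -powRrM.
    by rewrite mulfVK ?pnatr_eq0 // powR_mulrn // addnC.
  rewrite -!mulrA -/eps !exprMn sqr_sqrtr ?ler0n // e1.
  rewrite mulrA -exprSr prednK; last by rewrite addn_gt0 hn.
  done.
apply: bigmaxr_le.
  by apply: mulr_ge0 => //; apply: mulr_ge0; [apply: mulr_ge0; [exact: powR_ge0|exact: sqrtr_ge0]|exact: ltW].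
move=> i.
set y := (A *m map_mx (fun x : int => (x%:~R : R)) (q k) - map_mx (fun x : int => (x%:~R : R)) p) i 0.
have ey : y = \sum_(j < m) (q k j ord0)%:~R * A i j - (p i 0)%:~R.
  rewrite /y !mxE; congr (_ - _); apply: eq_bigr => j _; rewrite !mxE mulrC //.
apply: le_trans (dnint_le _ (p i 0)) _; rewrite -ey.
apply: sq_le.
  by apply: mulr_ge0; [apply: mulr_ge0; [apply: mulr_ge0; [exact: powR_ge0|exact: sqrtr_ge0]|exact: ltW]|exact: powR_ge0].
rewrite -hE2.
have hy : y ^+ 2 <= dotv b b.
  rewrite ep dotv_col.
  have := dotv_ge0 (c *: map_mx (fun x : int => (x%:~R : R)) (q k)).
  have := dotv_term (A *m map_mx (fun x : int => (x%:~R : R)) (q k) - map_mx (fun x : int => (x%:~R : R)) p) i.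
  rewrite -/y; lra.
apply: (le_trans hy); apply: (le_trans hL); apply: ler_wpM2l => //.
Qed.
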